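(* For all positive integers $\beta,p$, the transition matrix $A_{\beta,p}$ is irreducible.
   Context: Let $\beta,p$ be positive integers. Let $S_{\beta,p}=\{\mathbf{s}\in\{0,1\}^{\beta-1}: wt(\mathbf{s})\le p\}$, where $wt$ is Hamming weight, let $M=\sum_{i=0}^p\binom{\beta-1}{i}=|S_{\beta,p}|$, and fix an ordering $\mathbf{s}_1,\ldots,\mathbf{s}_M$ of $S_{\beta,p}$. The merge of two vectors $\mathbf{u},\mathbf{v}\in\{0,1\}^{\beta-1}$ is $f(\mathbf{u},\mathbf{v})=\mathbf{u}$ concatenated with the last bit of $\mathbf{v}$ (a vector of length $\beta$) if the last $\beta-2$ bits of $\mathbf{u}$ equal the first $\beta-2$ bits of $\mathbf{v}$, and $f(\mathbf{u},\mathbf{v})=\mathbf{F}$ (failure) otherwise. The transition matrix $A_{\beta,p}=(a_{i,j})\in\{0,1\}^{M\times M}$ has $a_{i,j}=1$ if $f(\mathbf{s}_i,\mathbf{s}_j)\neq\mathbf{F}$ and $wt(f(\mathbf{s}_i,\mathbf{s}_j))\le p$, and $a_{i,j}=0$ otherwise. A matrix $A\in\{0,1\}^{M\times M}$ is irreducible if for all $1\le i,j\le M$ there is an integer $k\ge 0$ (possibly depending on $i,j$) with $(A^k)_{i,j}>0$. *)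

(* Defs.v *)
From mathcomp Require Import all_boot all_algebra.
Set Implicit Arguments. Unset Strict Implicit. Unset Printing Implicit Defensive.
Local Open Scope ring_scope.

Definition wt (s : seq bool) : nat := count id s.

(* merge f(u,v): u ++ [last bit of v] if the last beta-2 bits of u equal the
   first beta-2 bits of v; None encodes the failure symbol F.
   For vectors of length beta-1, the last beta-2 bits of u are
   drop ((beta-1)-(beta-2)) u. *)
Definition merge (beta : nat) (u v : seq bool) : option (seq bool) :=
  if drop (beta.-1 - beta.-2)%N u == take beta.-2 v
  then Some (rcons u (last false v)) else None.

Definition Mcard (beta p : nat) : nat := (\sum_(i < p.+1) 'C(beta.-1, i))%N.

Definition is_ordering (beta p : nat)
  (s : 'I_(Mcard beta p) -> beta.-1.-tuple bool) : Prop :=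
  injective s /\ (forall i, (wt (s i) <= p)%N) /\
  (forall t : beta.-1.-tuple bool, (wt t <= p)%N -> exists i, s i = t).

Definition trans_mx (beta p : nat)
  (s : 'I_(Mcard beta p) -> beta.-1.-tuple bool) : 'M[nat]_(Mcard beta p) :=
  \matrix_(i, j) (match merge beta (s i) (s j) with
                  | Some w => (wt w <= p)%N
                  | None => false end : nat).

Definition mxpow (n : nat) (A : 'M[nat]_n) (k : nat) : 'M[nat]_n :=
  iter k (fun B => B *m A) 1%:M.

Definition irreducible_mx (n : nat) (A : 'M[nat]_n) : Prop :=
  forall i j : 'I_n, exists k : nat, (0 < mxpow A k i j)%N.

(* Main.v *)
Require Import Defs.
From mathcomp Require Import all_boot all_algebra.

Lemma reach_step (m : nat) (A : 'M[nat]_m) i l j k :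
  (0 < mxpow A k i l)%N -> (0 < A l j)%N -> (0 < mxpow A k.+1 i j)%N.
Proof.
move=> h1 h2; rewrite /mxpow iterS -/(mxpow A k) mxE (bigD1 l) //=.
have : (0 < mxpow A k i l * A l j)%N by rewrite muln_gt0 h1.
move=> h; exact: (leq_trans h (leq_addr _ _)).
Qed.

Lemma nseq_rcons (T : Type) (x : T) k : nseq k.+1 x = rcons (nseq k x) x.
Proof. by elim: k => //= k ->. Qed.

Lemma wt_cat a b : wt (a ++ b) = (wt a + wt b)%N.
Proof. by rewrite /wt count_cat. Qed.

Lemma wt_nseq k : wt (nseq k false) = 0%N.
Proof. by rewrite /wt count_nseq. Qed.

Lemma wt_drop k u : (wt (drop k u) <= wt u)%N.
Proof. by rewrite -{2}(cat_take_drop k u) wt_cat leq_addl. Qed.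

Lemma wt_take k u : (wt (take k u) <= wt u)%N.
Proof. by rewrite -{2}(cat_take_drop k u) wt_cat leq_addr. Qed.

Section Main.
Variables (n p : nat) (s : 'I_(Mcard n.+2 p) -> n.+1.-tuple bool).
Hypothesis hs : is_ordering s.

Definition R i j := exists k, (0 < mxpow (trans_mx s) k i j)%N.
Definition Rs (u v : seq bool) :=
  forall i j, val (s i) = u -> val (s j) = v -> R i j.

Lemma Rs_step u w (b : bool) : Rs u w -> size w = n.+1 -> (wt w + b <= p)%N ->
  Rs u (rcons (behead w) b).
Proof.
move=> h sw hw i j hi hj.
have sw' : size w == n.+1 by rewrite sw.
have hwp : (wt (Tuple sw') <= p)%N by apply: leq_trans hw; rewrite leq_addr.
have [_ [_ hsurj]] := hs.
have [l hl] := hsurj _ hwp.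
have [k hk] : R i l by apply: h => //; rewrite hl.
exists k.+1; apply: (@reach_step _ _ i l j k hk).
rewrite mxE /Defs.merge hj hl /= subSnn drop1 -cats1 take_size_cat; last first.
  by rewrite size_behead sw.
rewrite eqxx /= last_cat /= -cats1 wt_cat /=.
by rewrite addn0 hw.
Qed.

Lemma to_zero u k : size u = n.+1 -> (wt u <= p)%N -> (k <= n.+1)%N ->
  Rs u (drop k u ++ nseq k false).
Proof.
move=> su wu; elim: k => [_|k IH hk].
  rewrite drop0 cats0 => i j hi hj.
  have [hinj _] := hs.
  have -> : i = j by apply: hinj; apply: val_inj; rewrite hi hj.
  by exists 0%N; rewrite /mxpow /= mxE eqxx.
have := @Rs_step _ _ false (IH (ltnW hk)).
rewrite size_cat size_drop size_nseq su subnK ?(ltnW hk) // => /(_ erefl).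
rewrite addn0 wt_cat wt_nseq addn0 (leq_trans (wt_drop _ _) wu) => /(_ isT).
have hd : size (drop k u) != 0%N by rewrite size_drop su subn_eq0 -ltnNge.
have -> : behead (drop k u ++ nseq k false) = behead (drop k u) ++ nseq k false.
  by move: hd; case: (drop k u).
rewrite -drop1 drop_drop add1n.
by rewrite rcons_cat -nseq_rcons.
Qed.

Lemma from_zero u v k : size v = n.+1 -> (wt v <= p)%N -> (k <= n.+1)%N ->
  Rs u (nseq n.+1 false) -> Rs u (nseq (n.+1 - k) false ++ take k v).
Proof.
move=> sv wv + h0; elim: k => [_|k IH hk].
  by rewrite subn0 take0 cats0.
have := @Rs_step _ _ (nth false v k) (IH (ltnW hk)).
rewrite size_cat size_take size_nseq sv hk subnK ?(ltnW hk) // => /(_ erefl).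
have -> : (n.+1 - k = (n - k).+1)%N by rewrite subSn.
rewrite wt_cat wt_nseq add0n /= subSS.
have := wt_take k.+1 v; rewrite (take_nth false) ?sv // -cats1 wt_cat /= addn0.
move=> h1; have := leq_trans h1 wv; rewrite /wt /= => h2.
have : (count id (take k v) + nth false v k <= p)%N by move: h2; case: (nth false v k).
move=> h3 /(_ h3).
by rewrite -cats1 -catA cats1.
Qed.

Lemma main_irr : irreducible_mx (trans_mx s).
Proof.
move=> i j.
have si := size_tuple (s i); have sj := size_tuple (s j).
have [_ [hw _]] := hs.
have h1 := to_zero (s i) n.+1 si (hw i) (leqnn n.+1).
rewrite drop_oversize ?si // in h1.
have := from_zero (s i) (s j) n.+1 sj (hw j) (leqnn n.+1) h1.
rewrite subnn take_oversize ?sj //.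
by apply.
Qed.
End Main.

Theorem lemma1 (beta p : nat) : (0 < beta)%N -> (0 < p)%N ->
  forall s : 'I_(Mcard beta p) -> beta.-1.-tuple bool,
  is_ordering s -> irreducible_mx (trans_mx s).
Proof.
case: beta => [|[|n]] // _ _ s hs.
  move=> i j; exists 0%N; have [hinj _] := hs.
  have -> : i = j by apply: hinj; apply: val_inj; exact: (etrans (size0nil (size_tuple (s i))) (esym (size0nil (size_tuple (s j))))).
  by rewrite /mxpow /= mxE eqxx.
exact: main_irr.
Qed.
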